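(* Let $\mathcal{P}$ be a property of unordered partial systems that is monotone increasing (if $S\in\mathcal{P}$ and $S'\supseteq S$ then $S'\in\mathcal{P}$). Fix $\alpha\in(0,1)$ and $S\in\mathcal{O}_m$ for some $m\le N-\alpha N$. Let $\mathbf{S}$ have distribution $\mathbb{R}(S,\alpha N)$ and $\mathbf{S}^*$ have distribution $\mathbb{G}^*(S,\alpha/n)$. Then \[ \Pr\left(S\cup\mathbf{S}\notin\mathcal{P}\right)=O(1)\Pr\left(S\cup\mathbf{S}^*\notin\mathcal{P}\right), \] where $S\cup S'$ denotes the unordered partial system consisting of the hyperedges of $S$ and of $S'$.
   Context: Throughout, $n\equiv1$ or $3\pmod 6$, $N=\binom n2/3$, $\alpha N$ is treated as an integer and asymptotics are as $n\to\infty$. A partial system is a 3-uniform hypergraph on $[n]$ in which every pair of vertices lies in at most one hyperedge; $\mathcal{O}_m$ is the set of ordered partial systems with $m$ hyperedges. $G(S)$ is the graph on $[n]$ of pairs not contained in a hyperedge of $S$. For a partial system $S$, $\mathbb{G}(S,p)$ is the random 3-uniform hypergraph in which each triple not conflicting with $S$ (i.e. not intersecting a hyperedge of $S$ in at least 2 vertices, equivalently each triangle of $G(S)$) is included independently with probability $p$; $\mathbb{G}^*(S,p)$ is the partial system obtained from $\mathbb{G}(S,p)$ by deleting every hyperedge that intersects another hyperedge of it in at least 2 vertices. $\mathbb{R}(S,m)$ is the distribution of the partial system formed by the triangles removed in the first $m$ steps of the triangle removal process started from $G(S)$ (repeatedly deleting the edges of a uniformly random triangle of the current graph); if the process runs out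 of triangles before $m$ steps its output is the symbol $*$. Conventions: $*$ is a superset of every partial system, $*\in\mathcal{P}$, and $S\cup *=*$. *)

(* Defs.v *)
From HB Require Import structures.
From mathcomp Require Import all_boot all_order all_algebra.
From mathcomp Require Import reals.
Set Implicit Arguments. Unset Strict Implicit. Unset Printing Implicit Defensive.
Import Order.TTheory GRing.Theory Num.Theory.
Local Open Scope ring_scope.

Section Defs.
Variable n : nat.
Definition hgraph := {set {set 'I_n}}.

Definition Nsys : nat := ('C(n, 2) %/ 3)%N.

Definition partial_sys (H : hgraph) : bool :=
  [forall e in H, #|e| == 3%N] &&
  [forall e in H, forall f in H, (e != f) ==> (#|e :&: f| <= 1)%N].

Definition ordered_psys (m : nat) (s : seq {set 'I_n}) : bool :=
  [&& size s == m, uniq s & partial_sys [set e in s]].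

Definition graph_of (H : hgraph) : hgraph :=
  [set p : {set 'I_n} | (#|p| == 2%N) && [forall e in H, ~~ (p \subset e)]].

Definition triangles (G : hgraph) : hgraph :=
  [set t : {set 'I_n} | (#|t| == 3%N) &&
     [forall p : {set 'I_n}, ((#|p| == 2%N) && (p \subset t)) ==> (p \in G)]].

Definition remove_tri (G : hgraph) (t : {set 'I_n}) : hgraph :=
  G :\: [set p : {set 'I_n} | (#|p| == 2%N) && (p \subset t)].

(* The outcome is [Some X] (X = set of removed
   triangles) or [None] (the symbol * : ran out of triangles). *)
Fixpoint rem_prob (R : realType) (E : option hgraph -> bool) (k : nat)
    (G acc : hgraph) : R :=
  match k with
  | 0 => (E (Some acc))%:R
  | k'.+1 =>
      if triangles G == set0 then (E None)%:R
      else (#|triangles G|%:R)^-1 *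
           \sum_(t in triangles G) rem_prob R E k' (remove_tri G t) (t |: acc)
  end.

(* event "S u S' notin P", with the convention * in P and S u * = * *)
Definition bad_event (P : hgraph -> bool) (H : hgraph) (o : option hgraph) : bool :=
  if o is Some X then ~~ P (H :|: X) else false.

Definition prob_removal (R : realType) (P : hgraph -> bool)
    (s : seq {set 'I_n}) (k : nat) : R :=
  rem_prob R (bad_event P [set e in s]) k (graph_of [set e in s]) set0.

Definition free_triples (H : hgraph) : hgraph :=
  [set t : {set 'I_n} | (#|t| == 3%N) && [forall e in H, (#|t :&: e| <= 1)%N]].

(* G*(.) from G(.): delete hyperedges meeting another in >= 2 vertices *)
Definition clean (X : hgraph) : hgraph :=
  [set e in X | [forall f in X, (f != e) ==> (#|e :&: f| <= 1)%N]].

Definition prob_binomial (R : realType) (p : R) (P : hgraph -> bool)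
    (s : seq {set 'I_n}) : R :=
  let H := [set e in s] in
  \sum_(X : hgraph | X \subset free_triples H)
     p ^+ #|X| * (1 - p) ^+ (#|free_triples H| - #|X|) *
     (~~ P (H :|: clean X))%:R.

Definition monotone_prop (P : hgraph -> bool) : Prop :=
  forall A B : hgraph, partial_sys A -> partial_sys B ->
    A \subset B -> P A -> P B.
End Defs.

Definition steps (R : realType) (alpha : R) (n : nat) : nat :=
  Num.truncn (alpha * (Nsys n)%:R).

(* Main.v *)
Require Import Defs.
From HB Require Import structures.
From mathcomp Require Import all_boot all_order all_algebra.
From mathcomp Require Import reals.
From mathcomp Require Import ring lra zify.
Import Order.TTheory GRing.Theory Num.Theory.
Local Open Scope ring_scope.
Set Implicit Arguments. Unset Strict Implicit. Unset Printing Implicit Defensive.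

Section Comb.
Variable n : nat.

Lemma sub2 (A : {set 'I_n}) : (1 < #|A|)%N ->
  exists p : {set 'I_n}, p \subset A /\ #|p| = 2%N.
Proof.
case/card_gt1P => x [y [xA yA xy]]; exists [set x; y]; split.
  by apply/subsetP => z; rewrite !inE => /orP[]/eqP->.
by rewrite cards2 xy.
Qed.

Lemma partial_sub (A B : hgraph n) : partial_sys B -> A \subset B -> partial_sys A.
Proof.
move=> /andP[/forall_inP h1 /forall_inP h2] sAB; apply/andP; split.
  by apply/forall_inP => e eA; apply: h1; apply: (subsetP sAB).
apply/forall_inP => e eA; apply/forall_inP => f fA.
exact: (forall_inP (h2 e (subsetP sAB _ eA)) f (subsetP sAB _ fA)).
Qed.

Lemma partial_add (A : hgraph n) (t : {set 'I_n}) : partial_sys A -> #|t| = 3%N ->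
  (forall e, e \in A -> (#|t :&: e| <= 1)%N) -> partial_sys (t |: A).
Proof.
move=> /andP[/forall_inP h1 /forall_inP h2] ht hc; apply/andP; split.
  apply/forall_inP => e; rewrite in_setU1 => /orP[/eqP->|]; first by rewrite ht.
  exact: h1.
apply/forall_inP => e; rewrite in_setU1 => /orP[/eqP->|eA];
  apply/forall_inP => f; rewrite in_setU1 => /orP[/eqP->|fA]; apply/implyP.
- by rewrite eqxx.
- by move=> _; apply: hc.
- by move=> _; rewrite setIC; apply: hc.
- by move=> ef; exact: (implyP (forall_inP (h2 e eA) f fA) ef).
Qed.

Lemma tri_mono (G G' : hgraph n) : G \subset G' -> triangles G \subset triangles G'.
Proof.
move=> sG; apply/subsetP => t; rewrite !inE => /andP[-> /forallP h] /=.
apply/forallP => p; apply/implyP => hp; apply: (subsetP sG).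
exact: (implyP (h p) hp).
Qed.

Lemma tri_remove (G : hgraph n) (t u : {set 'I_n}) : u \in triangles G -> (#|u :&: t| <= 1)%N ->
  u \in triangles (remove_tri G t).
Proof.
rewrite !inE => /andP[-> /forallP h] hut /=; apply/forallP => p; apply/implyP.
move=> /andP[p2 pu]; rewrite !inE p2 /= (implyP (h p)) ?p2 ?pu // andbT.
apply/negP => pt; have : (2 <= #|u :&: t|)%N.
  by rewrite -(eqP p2); apply: subset_leq_card; rewrite subsetI pu.
by rewrite leqNgt ltnS hut.
Qed.

Lemma tri_remove_inter (G : hgraph n) (t u : {set 'I_n}) : u \in triangles (remove_tri G t) ->
  (#|u :&: t| <= 1)%N.
Proof.
rewrite inE => /andP[_ /forallP h]; rewrite leqNgt; apply/negP => /sub2 [p [pS p2]].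
have := implyP (h p); rewrite p2 eqxx (subset_trans pS (subsetIl _ _)) => /(_ isT).
by rewrite !inE p2 eqxx (subset_trans pS (subsetIr _ _)) /=.
Qed.


Lemma free_tri (H : hgraph n) : free_triples H = triangles (graph_of H).
Proof.
apply/setP => t; rewrite !inE; case: (#|t| == 3%N) => //=; apply/idP/idP.
  move=> /forall_inP h; apply/forallP => p; apply/implyP => /andP[p2 pt].
  rewrite inE p2 /=; apply/forall_inP => e eH; apply/negP => pe.
  have := h e eH; rewrite leqNgt => /negP; apply.
  by rewrite -(eqP p2); apply: subset_leq_card; rewrite subsetI pt.
move=> /forallP h; apply/forall_inP => e eH; rewrite leqNgt; apply/negP.
move=> /sub2 [p [pS p2]].
have := implyP (h p); rewrite p2 eqxx (subset_trans pS (subsetIl _ _)) => /(_ isT).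
rewrite inE => /andP[_ /forall_inP /(_ e eH)].
by rewrite (subset_trans pS (subsetIr _ _)).
Qed.

End Comb.


Section Proc.
Variable R : realType.
Variable n : nat.
Variable P : hgraph n -> bool.
Hypothesis Pmono : monotone_prop P.
Variable H : hgraph n.
Hypothesis Hps : partial_sys H.

Definition Inv (G acc : hgraph n) := partial_sys (H :|: acc) &&
  [forall t in triangles G, [forall e in H :|: acc, (#|t :&: e| <= 1)%N]].

Lemma Inv_step (G acc : hgraph n) (t : {set 'I_n}) : Inv G acc -> t \in triangles G ->
  Inv (remove_tri G t) (t |: acc).
Proof.
move=> /andP[ps /forall_inP hc] tT; apply/andP; split.
  rewrite setUCA; apply: partial_add => //.
    by move: tT; rewrite inE => /andP[/eqP].
  by move=> e eA; exact: (forall_inP (hc t tT) e eA).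
apply/forall_inP => u uT; apply/forall_inP => e; rewrite setUCA in_setU1.
case/orP=> [/eqP->|eH]; first exact: tri_remove_inter uT.
apply: (forall_inP (hc u _)) => //.
exact: (subsetP (tri_mono (subsetDl _ _)) u uT).
Qed.

Lemma Inv_init : Inv (graph_of H) set0.
Proof.
apply/andP; split; first by rewrite setU0.
apply/forall_inP => t; rewrite -free_tri inE setU0 => /andP[_ h]; exact: h.
Qed.

Definition Ev (X : hgraph n) := partial_sys (H :|: X) && ~~ P (H :|: X).

Lemma Ev_down (X Y : hgraph n) : X \subset Y -> Ev Y -> Ev X.
Proof.
move=> sXY /andP[psY nP].
have sU : H :|: X \subset H :|: Y by apply: setUS.
have psX := partial_sub psY sU.
rewrite /Ev psX /=; apply/negP => PX; move/negP: nP; apply.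
exact: Pmono PX.
Qed.

Lemma Ev_le (X Y : hgraph n) : X \subset Y -> (Ev Y)%:R <= (Ev X)%:R :> R.
Proof. by move=> s; case: (boolP (Ev Y)) => // /(Ev_down s) ->. Qed.

Notation Rv := (rem_prob R (bad_event P H)).

Lemma rem_base k : forall G acc, Inv G acc -> Rv k G acc <= (Ev acc)%:R.
Proof.
elim: k => [|k IH] G acc hI /=.
  by move: hI => /andP[ps _]; rewrite /Ev ps.
case: ifP => _; first by rewrite ler0n.
set T := triangles G.
apply: (@le_trans _ _ (#|T|%:R^-1 * \sum_(t in T) (Ev acc)%:R)).
  apply: ler_wpM2l; first by rewrite invr_ge0 ler0n.
  apply: ler_sum => t tT; apply: le_trans (IH _ _ (Inv_step hI tT)) _.
  by apply: Ev_le; apply: subsetUr.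
rewrite sumr_const; have [T0|Tp] := eqVneq #|T| 0%N.
  by rewrite T0 mulr0n mulr0 ler0n.
by rewrite -[(Ev acc)%:R *+ _]mulr_natl mulrA mulVf ?mul1r // pnatr_eq0.
Qed.


Definition Sd (L : nat) (V : hgraph n) (f : hgraph n -> R) :=
  \sum_(Z : hgraph n | (Z \subset V) && (#|Z| == L)) f Z.

Lemma Sd_ge0 L V f : (forall Z, 0 <= f Z) -> 0 <= Sd L V f.
Proof. by move=> h; apply: sumr_ge0 => Z _. Qed.

Lemma Sd_rec L (V : hgraph n) (f : hgraph n -> R) :
  (L.+1)%:R * Sd L.+1 V f = \sum_(t in V) Sd L (V :\ t) (fun Z => f (t |: Z)).
Proof.
rewrite /Sd mulr_sumr (eq_bigr (fun Y : hgraph n => \sum_(t in Y) f Y)); last first.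
  by move=> Y /andP[_ /eqP cY]; rewrite sumr_const cY mulr_natl.
rewrite (exchange_big_dep (mem V)) /=; last first.
  by move=> Y t /andP[sYV _]; apply: (subsetP sYV t).
apply: eq_bigr => t tV.
rewrite [in RHS](reindex_onto (fun Y : hgraph n => Y :\ t) (fun Z => t |: Z)); last first.
  move=> Z /andP[sZ _]; apply: setU1K; apply/negP => tZ.
  by move: (subsetP sZ t tZ); rewrite in_setD1 eqxx.
apply: eq_big => [Y|Y /andP[_ tY]]; last by rewrite setD1K.
case tY: (t \in Y); last first.
  rewrite andbF; apply/esym/negP => /andP[_ /eqP e]; move: tY; by rewrite -e setU11.
rewrite setD1K // eqxx !andbT.
have cY : #|Y| = (#|Y :\ t|).+1 by rewrite (cardsD1 t Y) tY.
rewrite cY eqSS; congr (_ && _); apply/idP/idP.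
  by move=> s; apply: setSD.
move=> s; apply/subsetP => y yY; case: (eqVneq y t) => [->//|yt].
have : y \in Y :\ t by rewrite in_setD1 yt yY.
by move/(subsetP s); rewrite in_setD1 => /andP[_ ->].
Qed.

Definition Fset (G acc Y : hgraph n) :=
  acc :|: [set u in clean Y | u \in triangles G].

Lemma clean_sub (Y : hgraph n) : clean Y \subset Y.
Proof. by apply/subsetP => u; rewrite inE => /andP[]. Qed.

Lemma cleanP (Y : hgraph n) (u f : {set 'I_n}) : u \in clean Y -> f \in Y -> f != u ->
  (#|u :&: f| <= 1)%N.
Proof. by rewrite inE => /andP[_ /forall_inP h] fY fu; exact: (implyP (h f fY) fu). Qed.

Lemma inFset (G acc Y : hgraph n) u : (u \in Fset G acc Y) =
  (u \in acc) || ((u \in clean Y) && (u \in triangles G)).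
Proof. by rewrite /Fset !inE. Qed.

Lemma Fset_acc (G acc Y : hgraph n) (t : {set 'I_n}) : t \in Y ->
  Fset G acc Y \subset Fset (remove_tri G t) (t |: acc) Y.
Proof.
move=> tY; apply/subsetP => u; rewrite !inFset in_setU1.
case/orP=> [->|/andP[uc uT]]; first by rewrite orbT.
case: (eqVneq u t) => [->|ut] //=.
rewrite uc /=; apply/orP; right; apply: tri_remove => //.
by apply: cleanP uc tY _; rewrite eq_sym.
Qed.

Lemma main L : forall k (G acc W V : hgraph n), (L <= k)%N -> (L <= #|V|)%N ->
  Inv G acc -> triangles G \subset V -> [disjoint W & V] ->
  Rv k G acc * ('C(#|V|, L))%:R <= Sd L V (fun Z => (Ev (Fset G acc (W :|: Z)))%:R).
Proof.
elim: L => [|L IH] k G acc W V hk hV hI hT hWV.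
  rewrite bin0 mulr1 /Sd (big_pred1 set0); last first.
    by move=> Z /=; rewrite cards_eq0; case: (Z =P set0) => [->|_]; rewrite ?sub0set ?andbF.
  rewrite setU0 /Fset (_ : [set u in clean W | u \in triangles G] = set0) ?setU0.
    exact: rem_base.
  apply/setP => u; rewrite in_set0 in_set; apply/negP => /andP[uc uT].
  have uW := subsetP (clean_sub W) u uc; have uV := subsetP hT u uT.
  by move: (disjointFr hWV uW); rewrite uV.
case: k hk => // k; rewrite ltnS => hk.
have hV0 : (0 < #|V|)%N by apply: leq_trans hV.
have [T0|TN] := eqVneq (triangles G) set0.
  have -> : Rv k.+1 G acc = 0 by rewrite /= T0 eqxx.
  by rewrite mul0r; apply: Sd_ge0 => Z; rewrite ler0n.
have hR : Rv k.+1 G acc = #|triangles G|%:R^-1 *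
    \sum_(t in triangles G) Rv k (remove_tri G t) (t |: acc).
  by rewrite /= (negbTE TN).
have cT : (0 < #|triangles G|)%N by rewrite card_gt0.
move: hR; set r := Rv k.+1 G acc => hR.
pose g t := if t \in triangles G then Rv k (remove_tri G t) (t |: acc)
            else r.
have sg : \sum_(t in V) g t = #|V|%:R * r.
  rewrite (big_setID (triangles G)) /= (setIidPr hT).
  rewrite (eq_bigr (fun t => Rv k (remove_tri G t) (t |: acc))); last first.
    by move=> t tT; rewrite /g tT.
  rewrite [X in _ + X](eq_bigr (fun t => r)); last first.
    by move=> t; rewrite in_setD => /andP[/negbTE tT _]; rewrite /g tT.
  rewrite sumr_const.
  have -> : \sum_(t in triangles G) Rv k (remove_tri G t) (t |: acc) =
      #|triangles G|%:R * r.
    by rewrite hR mulrA mulfV ?mul1r // pnatr_eq0 -lt0n.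
  rewrite -[r *+ _]mulr_natl -mulrDl -natrD.
  by rewrite -(cardsID (triangles G) V) (setIidPr hT).
have hL : (0 : R) < (L.+1)%:R by rewrite ltr0Sn.
have := ler_pM2l hL; move=> mono; rewrite -mono Sd_rec.
apply: (@le_trans _ _ (\sum_(t in V) g t * ('C(#|V|.-1, L))%:R)).
  rewrite -mulr_suml sg.
  have e : (L.+1)%:R * ('C(#|V|, L.+1))%:R = #|V|%:R * ('C(#|V|.-1, L))%:R :> R.
    by rewrite -!natrM mul_bin_diag.
  rewrite mulrCA e mulrA [_ * Rv _ _ _]mulrC -mulrA.
  by [].
apply: ler_sum => t tV.
have cVt : #|V :\ t| = #|V|.-1 by rewrite (cardsD1 t V) tV.
have hLt : (L <= #|V :\ t|)%N by rewrite cVt -ltnS prednK.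
have dWt : [disjoint t |: W & V :\ t].
  rewrite -setI_eq0; apply/eqP/setP => x; rewrite in_setI in_setU1 in_setD1 in_set0.
  case: (eqVneq x t) => //= _; case xW: (x \in W) => //=.
  by rewrite (disjointFr hWV xW).
have eU Z : W :|: (t |: Z) = (t |: W) :|: Z by rewrite setUCA setUA.
rewrite -cVt /g; case tT: (t \in triangles G).
  have tc : #|t| = 3%N by move: tT; rewrite inE => /andP[/eqP].
  apply: le_trans (IH k (remove_tri G t) (t |: acc) (t |: W) (V :\ t) hk hLt
     (Inv_step hI tT) _ dWt) _.
    apply/subsetP => u uT'; rewrite in_setD1; apply/andP; split.
      apply/negP => /eqP ut; move: (tri_remove_inter uT'); rewrite ut setIid tc.
      by [].
    exact: subsetP hT u (subsetP (tri_mono (subsetDl _ _)) u uT').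
  apply: ler_sum => Z _; apply: Ev_le; rewrite eU; apply: Fset_acc.
  by rewrite in_setU in_setU1 eqxx.
apply: le_trans (IH k.+1 G acc (t |: W) (V :\ t) (leqW hk) hLt hI _ dWt) _.
  apply/subsetP => u uT; rewrite in_setD1 (subsetP hT u uT) andbT.
  by apply/negP => /eqP ut; rewrite -ut uT in tT.
by apply: ler_sum => Z _; rewrite eU.
Qed.

End Proc.


Section Binom.
Variable R : realType.
Variables p q : R.

Definition bs (T : nat) (f : nat -> R) :=
  \sum_(j < T.+1) ('C(T, j))%:R * p ^+ j * q ^+ (T - j) * f j.

Lemma bs_rec T f : bs T.+1 f = q * bs T f + p * bs T (fun j => f j.+1).
Proof.
rewrite /bs big_ord_recl /= bin0 expr0 mul1r subn0.
rewrite (eq_bigr (fun i : 'I_T.+1 => 'C(T, i.+1)%:R * p ^+ i.+1 * q ^+ (T - i) * f i.+1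
   + p * ('C(T, i)%:R * p ^+ i * q ^+ (T - i) * f i.+1))); last first.
  move=> i _; rewrite /bump /= add1n binS natrD subSS exprS; ring.
rewrite big_split /= -mulr_sumr mul1r addrA; congr (_ + _).
rewrite [in RHS]big_ord_recl /= bin0 expr0 !mul1r subn0 mulrDr exprS mulrA; congr (_ + _).
rewrite big_ord_recr /= bin_small // !mul0r addr0.
rewrite mulr_sumr; apply: eq_bigr => i _; rewrite /bump /= add1n.
rewrite -(subnSK (ltn_ord i)) [q ^+ (_.+1)]exprS; ring.
Qed.


Lemma bs_ext T f g : f =1 g -> bs T f = bs T g.
Proof. by move=> e; apply: eq_bigr => j _; rewrite e. Qed.

Lemma bs_lin T f g a b :
  bs T (fun j => a * f j + b * g j) = a * bs T f + b * bs T g.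
Proof. rewrite /bs !mulr_sumr -big_split; apply: eq_bigr => j _ /=.
by move: (_ * p ^+ j * _) (f j) (g j) => c x y; ring. Qed.

Hypothesis pq : p + q = 1.

Lemma bsM0 T : bs T (fun _ => 1) = 1.
Proof.
elim: T => [|T IH]; first by rewrite /bs big_ord_recl big_ord0 /= bin0 !expr0 !mul1r addr0.
by rewrite bs_rec IH !mulr1 addrC.
Qed.

Lemma bsM1 T : bs T (fun j => j%:R) = T%:R * p.
Proof.
elim: T => [|T IH]; first by rewrite /bs big_ord_recl big_ord0 /= !mulr0 addr0 mul0r.
rewrite bs_rec IH (bs_ext _ (g := fun j => 1 * j%:R + 1 * 1)); last first.
  by move=> j; rewrite mul1r mulr1 -natr1.
rewrite bs_lin IH bsM0 -natr1.
have -> : q = 1 - p by rewrite -pq addrAC subrr add0r.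
ring.
Qed.

Lemma bsM2 T : bs T (fun j => j%:R ^+ 2) = T%:R * p * q + (T%:R * p) ^+ 2.
Proof.
elim: T => [|T IH]; first by rewrite /bs big_ord_recl big_ord0 /=; ring.
rewrite bs_rec IH (bs_ext _ (g := fun j => 1 * (j%:R ^+ 2) + 1 * (2 * j%:R + 1 * 1))); last first.
  by move=> j; rewrite -natr1; ring.
rewrite bs_lin IH bs_lin bsM1 bsM0 -natr1.
have -> : q = 1 - p by rewrite -pq addrAC subrr add0r.
ring.
Qed.

Hypotheses (p0 : 0 <= p) (q0 : 0 <= q).

Lemma beta_ge0 T (j : 'I_T.+1) : 0 <= ('C(T, j))%:R * p ^+ j * q ^+ (T - j).
Proof. by rewrite !mulr_ge0 ?exprn_ge0 ?ler0n. Qed.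

Lemma bsM2c T c : bs T (fun j => (j%:R + c) ^+ 2) = T%:R * p * q + (T%:R * p + c) ^+ 2.
Proof.
rewrite (bs_ext _ (g := fun j => 1 * (j%:R ^+ 2) + 1 * ((2 * c) * j%:R + c ^+ 2 * 1))); last first.
  by move=> j; ring.
rewrite bs_lin bs_lin bsM2 bsM1 bsM0; ring.
Qed.

Lemma head_bound T k u :
  0 < (k.+1)%:R - T%:R * p + u ->
  1 - (T%:R * p * q + u ^+ 2) / ((k.+1)%:R - T%:R * p + u) ^+ 2 <=
  \sum_(j < T.+1 | (j <= k)%N) ('C(T, j))%:R * p ^+ j * q ^+ (T - j).
Proof.
set su := _ + u => su0.
have e1 : \sum_(j < T.+1) ('C(T, j))%:R * p ^+ j * q ^+ (T - j) = 1.
  by rewrite -[RHS](bsM0 T); apply: eq_bigr => j _; rewrite mulr1.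
rewrite (bigID (fun j : 'I_T.+1 => (j <= k)%N)) /= in e1.
suff hB : \sum_(j < T.+1 | ~~ (j <= k)%N) ('C(T, j))%:R * p ^+ j * q ^+ (T - j)
   <= (T%:R * p * q + u ^+ 2) / su ^+ 2 by lra.
have su2 : 0 < su ^+ 2 by rewrite exprn_gt0.
have := bsM2c T (u - T%:R * p); rewrite addrCA subrr addr0 => <-.
rewrite /bs mulr_suml.
apply: (@le_trans _ _ (\sum_(j < T.+1 | ~~ (j <= k)%N) ('C(T, j))%:R * p ^+ j * q ^+ (T - j) *
   (j%:R + (u - T%:R * p)) ^+ 2 / su ^+ 2)).
  apply: ler_sum => j; rewrite -ltnNge => kj.
  rewrite -[X in _ <= X]mulrA; apply: ler_peMr; first exact: beta_ge0.
  rewrite ler_pdivlMr // mul1r.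
  have hj : su <= j%:R + (u - T%:R * p).
    rewrite /su; have : ((k.+1)%:R <= j%:R :> R) by rewrite ler_nat.
    lra.
  rewrite ler_sqr ?nnegrE //; first by apply: ltW.
  by apply: le_trans hj; apply: ltW.
rewrite [X in _ <= X](bigID (fun j : 'I_T.+1 => (j <= k)%N)) /= lerDr.
apply: sumr_ge0 => j _; apply: divr_ge0; last by apply: ltW.
by rewrite mulr_ge0 ?beta_ge0 ?sqr_ge0.
Qed.


End Binom.

Section NumSec.
Variable R : realType.

Lemma beta_bound (a : R) (m T k N : nat) : 0 < a -> a < 1 ->
  (T * 6 <= (m + 6) * (m + 5) * (m + 4))%N ->
  ((m + 6) * (m + 5) <= 6 * N + 4)%N ->
  a * N%:R < (k.+1)%:R ->
  a / 7 <= \sum_(j < T.+1 | (j <= k)%N)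
     ('C(T, j))%:R * (a / (m + 6)%:R) ^+ j * (1 - a / (m + 6)%:R) ^+ (T - j).
Proof.
move=> a0 a1 hT hN hk.
set y := m%:R : R.
have y0 : 0 <= y by rewrite ler0n.
have ex : (m + 6)%:R = y + 6 :> R by rewrite natrD.
rewrite ex.
set x := y + 6.
have x0 : 0 < x by rewrite /x; lra.
move: hT; rewrite -(ler_nat R) !natrM !natrD => hT.
move: hN; rewrite -(ler_nat R) !natrM !natrD => hN.
rewrite -/y in hT hN.
set p := a / x.
have p0 : 0 <= p by rewrite /p divr_ge0 // ltW.
have p1 : p <= 1 by rewrite /p ler_pdivrMr // mul1r /x; lra.
set Tp := T%:R * p.
have Tp0 : 0 <= Tp by rewrite /Tp mulr_ge0 ?ler0n.
have hTp : Tp * 6 <= a * (y + 5) * (y + 4).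
  rewrite /Tp /p mulrA mulrAC ler_pdivrMr //.
  have := ler_wpM2r (ltW a0) hT; rewrite /x.
  move=> h; rewrite mulrAC; apply: le_trans h _; rewrite le_eqVlt; apply/orP; left; apply/eqP; ring.
set s := (k.+1)%:R - Tp.
have haN : a * ((y + 6) * (y + 5)) <= a * (6 * N%:R + 4).
  have hN' : (y + 6) * (y + 5) <= 6 * N%:R + 4 by lra.
  by apply: ler_wpM2l => //; apply: ltW.
have hs : a * x / 6 <= s.
  rewrite /s /x; nra.
have s0 : 0 < s by apply: lt_le_trans hs; apply: divr_gt0 => //; apply: mulr_gt0.
set sg := Tp * (1 - p).
have sg0 : 0 <= sg by rewrite /sg mulr_ge0 // subr_ge0.
have hsg : sg <= a * x ^+ 2 / 6.
  have : sg <= Tp by rewrite /sg ler_piMr // lerBlDr lerDl.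
  move=> h; apply: le_trans h _; rewrite /x; nra.
have u0 : 0 <= sg / s by rewrite divr_ge0 // ltW.
have pq : p + (1 - p) = 1 by rewrite addrCA subrr addr0.
have q0 : 0 <= 1 - p by rewrite subr_ge0.
have := @head_bound R p (1 - p) pq p0 q0 T k (sg / s).
rewrite -/Tp -/s -/sg.
have su : 0 < s + sg / s by lra.
move=> /(_ su); apply: le_trans.
have -> : 1 - (sg + (sg / s) ^+ 2) / (s + sg / s) ^+ 2 = s ^+ 2 / (s ^+ 2 + sg).
  have sn : s != 0 by rewrite gt_eqF.
  have sgn : s ^+ 2 + sg != 0.
    have : 0 < s ^+ 2 by rewrite exprn_gt0.
    by move=> h; rewrite gt_eqF //; lra.
  field; rewrite ?sn ?sgn //.
have s2 : 0 < s ^+ 2 by rewrite exprn_gt0.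
rewrite ler_pdivlMr; last by lra.
have hx : 0 <= a * x / 6 by apply: ltW; apply: divr_gt0 => //; apply: mulr_gt0.
have hs2 : (a * x / 6) ^+ 2 <= s ^+ 2 by rewrite ler_sqr ?nnegrE // ltW.
have h1 : a * sg <= a * (a * x ^+ 2 / 6) by apply: ler_wpM2l => //; apply: ltW.
have h2 : a * s ^+ 2 <= s ^+ 2 by rewrite ler_piMl // ltW.
nra.
Qed.

End NumSec.

Unset Implicit Arguments.

Theorem lemma2p10 (R : realType) (alpha : R) :
  0 < alpha < 1 ->
  exists C : R, exists n0 : nat,
  forall n : nat, (n0 <= n)%N -> (n %% 6 == 1)%N || (n %% 6 == 3)%N ->
  forall P : hgraph n -> bool, monotone_prop P ->
  forall (m : nat) (s : seq {set 'I_n}),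
    ordered_psys m s -> (m <= Nsys n - steps alpha n)%N ->
    prob_removal R P s (steps alpha n) <=
      C * prob_binomial (alpha / n%:R) P s.
Proof.
move=> /andP[a0 a1]; exists (7 / alpha), 6%N.
move=> n n6 _ P Pm m s hs _.
set H := [set e in s].
have Hps : partial_sys H by move: hs => /and3P[_ _].
set k := steps alpha n.
set FT := free_triples H.
set T := #|FT|.
set p := alpha / n%:R.
set beta := \sum_(j < T.+1 | (j <= k)%N) ('C(T, j))%:R * p ^+ j * (1 - p) ^+ (T - j).
have hbeta : alpha / 7 <= beta.
  have e6 : n%:R = ((n - 6) + 6)%N%:R :> R by rewrite subnK.
  rewrite /beta /p e6.
  have e5 : (n - 6 + 5 = n.-1)%N by rewrite -subn1; lia.
  have e4 : (n - 6 + 4 = n.-2)%N by rewrite -!subn1; lia.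
  have e66 : (n - 6 + 6 = n)%N by lia.
  apply: (@beta_bound R alpha (n - 6) T k (Nsys n)) => //; rewrite ?e66 ?e5 ?e4.
  - have hT3 : (T <= 'C(n, 3))%N.
      have := card_draws 'I_n 3; rewrite card_ord => <-.
      by apply: subset_leq_card; apply/subsetP => t; rewrite !inE => /andP[-> _].
    have hC3 : ('C(n, 3) * 6 = n * (n.-1 * n.-2))%N.
      by have := bin_ffact n 3; rewrite !ffactnS ffactn0 muln1.
    by rewrite -mulnA -hC3 leq_mul2r hT3 orbT.
  - have hC2 : ('C(n, 2) * 2 = n * n.-1)%N.
      by have := bin_ffact n 2; rewrite !ffactnS ffactn0 muln1.
    rewrite -hC2 /Nsys.
    have := divn_eq 'C(n, 2) 3; have := ltn_pmod 'C(n, 2) (isT : (0 < 3)%N).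
    lia.
  - by rewrite /k /steps; exact: truncnS_gt.
have FTe : FT = triangles (graph_of H) by rewrite /FT free_tri.
set r := prob_removal R P s k.
have rdef : r = rem_prob R (bad_event P H) k (graph_of H) set0 by [].
set B := prob_binomial p P s.
have Bdef : B = \sum_(X : hgraph n | X \subset FT)
    p ^+ #|X| * (1 - p) ^+ (T - #|X|) * (~~ P (H :|: clean X))%:R by [].
have p0 : 0 <= p by rewrite /p divr_ge0 // ?ler0n // ltW.
have p1 : p <= 1.
  rewrite /p ler_pdivrMr ?ltr0n ?(leq_trans _ n6) // mul1r.
  apply: le_trans (ltW a1) _; rewrite ler1n (leq_trans _ n6) //.
have q0 : 0 <= 1 - p by rewrite subr_ge0.
have B0 : 0 <= B.
  by rewrite Bdef; apply: sumr_ge0 => X _; rewrite !mulr_ge0 ?exprn_ge0 ?ler0n.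
have key : r * beta <= B.
  rewrite Bdef (partition_big (fun X : hgraph n => (inord #|X| : 'I_T.+1)) predT) //=.
  rewrite /beta mulr_sumr [X in _ <= X](bigID (fun j : 'I_T.+1 => (j <= k)%N)) /=.
  rewrite -[X in X <= _]addr0; apply: lerD; last first.
    by apply: sumr_ge0 => j _; apply: sumr_ge0 => X _; rewrite !mulr_ge0 ?exprn_ge0 ?ler0n.
  apply: ler_sum => j jk.
  rewrite (eq_bigl (fun X : hgraph n => (X \subset FT) && (#|X| == j))); last first.
    move=> X; case sX: (X \subset FT) => //=.
    have cX : (#|X| < T.+1)%N by rewrite ltnS subset_leq_card.
    by rewrite -val_eqE /= inordK.
  rewrite (eq_bigr (fun X => p ^+ j * (1 - p) ^+ (T - j) * (~~ P (H :|: clean X))%:R)); last first.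
    by move=> X /andP[_ /eqP ->].
  rewrite -mulr_sumr.
  have sT : triangles (graph_of H) \subset FT by rewrite FTe.
  have d0 : [disjoint (set0 : hgraph n) & FT] by rewrite -setI_eq0 set0I.
  have hm := @main R n P Pm H j k (graph_of H) set0 set0 FT jk (ltn_ord j)
     (Inv_init Hps) sT d0.
  rewrite -rdef -/T in hm.
  have hS : Sd (R:=R) j FT (fun Z : hgraph n =>
       (Ev P H (Fset (graph_of H) set0 (set0 :|: Z)))%:R) <=
     \sum_(i : hgraph n | (i \subset FT) && (#|i| == j)) (~~ P (H :|: clean i))%:R.
    rewrite /Sd; apply: ler_sum => Z /andP[sZ _].
    have -> : Fset (graph_of H) set0 (set0 :|: Z) = clean Z.
      apply/setP => u; rewrite inFset in_set0 set0U orFb.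
      case uc: (u \in clean Z); last by [].
      rewrite andTb -FTe.
      exact: (subsetP sZ u (subsetP (clean_sub Z) u uc)).
    rewrite /Ev; case: (partial_sys (H :|: clean Z)); last by rewrite andFb ler0n.
    by rewrite andTb.
  have pq0 : 0 <= p ^+ j * (1 - p) ^+ (T - j) by rewrite mulr_ge0 ?exprn_ge0.
  apply: le_trans (ler_wpM2l pq0 (le_trans hm hS)).
  move: ('C(T, j)%:R : R) (p ^+ j) ((1 - p) ^+ (T - j)) (r) => c x y z.
  by rewrite le_eqVlt; apply/orP; left; apply/eqP; ring.
have ab : 0 < alpha / 7 by rewrite divr_gt0.
have hr : r * (alpha / 7) <= B.
  case: (lerP r 0) => r0.
    by apply: le_trans B0; rewrite pmulr_lle0.
  by apply: le_trans key; rewrite ler_pM2l.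
have -> : r = 7 / alpha * (r * (alpha / 7)).
  move: (r) => z; have an : alpha != 0 by rewrite gt_eqF.
  by field.
by apply: ler_wpM2l => //; rewrite divr_ge0 // ltW.
Qed.
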